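(* Let $\varphi\in[0,\pi]$. Consider all post-selected linear optical implementations, using two dual-rail qubits on four signal modes, any finite number of auxiliary modes prepared in the vacuum, and photon-number-resolving detectors, of the two-qubit gate whose matrix in the computational basis $|00\rangle,|01\rangle,|10\rangle,|11\rangle$ is $U_\varphi=\mathrm{diag}(1,1,1,\mathrm{e}^{i\varphi})$. Here ''implementation'' means: the operator obtained from the network by restricting the input to the computational subspace, projecting the output of the signal modes onto the computational (dual-rail) subspace and projecting the auxiliary modes onto the vacuum equals $\sqrt{p_s}\,U_\varphi$ up to an overall phase, for some constant $p_s>0$ (the success probability, which is then the same for every input state). Then the maximal success probability over all such implementations is $$p_s(\varphi)=\left(1+2\left|\sin\frac{\varphi}{2}\right|+2^{3/2}\sin\frac{\pi-\varphi}{4}\sqrt{\left|\sin\frac{\varphi}{2}\right|}\right)^{-2}.$$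
   Context: Linear optics setting: a passive linear optical network on $m$ bosonic modes with creation operators $a_1^\dagger,\dots,a_m^\dagger$ is described by a unitary $m\times m$ matrix $V$, acting as $a_i^\dagger\mapsto\sum_{j} V_{j,i}a_j^\dagger$. This induces a unitary on Fock space that maps the vacuum to itself and conserves total photon number. Dual-rail encoding: qubit $k\in\{1,2\}$ is carried by two signal modes $\mathfrak{0}_k,\mathfrak{1}_k$, and the logical state $|b\rangle_k$ ($b\in\{0,1\}$) means exactly one photon in mode $\mathfrak{b}_k$ and none in the other. The computational subspace of the four signal modes is spanned by the four states with exactly one photon per qubit pair of modes. Auxiliary modes start in the vacuum; no auxiliary photons are used. After the network, all modes are measured with photon-number-resolving detectors, and the run is accepted (post-selected) only if every auxiliary mode is found in the vacuum and the signal modes are in the computational subspace. *)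

(* Defs.v *)
From HB Require Import structures.
From mathcomp Require Import all_boot all_order all_algebra.
From mathcomp Require Import complex.
From mathcomp Require Import reals trigo.

Set Implicit Arguments.
Unset Strict Implicit.
Unset Printing Implicit Defensive.

Import Order.TTheory GRing.Theory Num.Theory.
Local Open Scope ring_scope.
Local Open Scope complex_scope.

Section LinearOptics.
Variable R : realType.
Local Notation C := R[i].

(* A passive linear optical network on m modes is a unitary m x m matrix V;
   it acts on creation operators by  a_i^dag |-> \sum_j V j i a_j^dag. *)
Definition unitary_mx (m : nat) (V : 'M[C]_m) : Prop :=
  V *m (map_mx Num.conj V)^T = 1%:M.

(* The input state a_i^dag a_j^dag |vac>
   (i <> j) is mapped by the network to
     \sum_(k',l') V k' i * V l' j * a_k'^dag a_l'^dag |vac>.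
   Its inner product with the normalized output Fock state
   |1_k 1_l> = a_k^dag a_l^dag |vac>  (k <> l, all other modes in vacuum) is
     \sum_(k',l') V k' i * V l' j * <vac| a_l a_k a_k'^dag a_l'^dag |vac>
   where <vac| a_l a_k a_k'^dag a_l'^dag |vac> = [k'=k /\ l'=l] + [k'=l /\ l'=k]. *)
Definition amp2 (m : nat) (V : 'M[C]_m) (i j k l : 'I_m) : C :=
  \sum_(k' < m) \sum_(l' < m)
     V k' i * V l' j * ((((k', l') == (k, l)) || ((k', l') == (l, k))) : nat)%:R.

(* Mode layout on m = n + 4 modes (n auxiliary modes, all in the vacuum):
   modes 0,1 are the dual-rail modes 0_1,1_1 of qubit 1,
   modes 2,3 are the dual-rail modes 0_2,1_2 of qubit 2,
   modes 4..n+3 are auxiliary. *)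
Definition mode1 (n : nat) (b : bool) : 'I_(n.+4) := inord (nat_of_bool b).
Definition mode2 (n : nat) (b : bool) : 'I_(n.+4) := inord (2 + nat_of_bool b).

(* Post-selected operator on the computational subspace: matrix element
   <c1 c2| A |b1 b2>, i.e. amplitude to find the signal modes in logical
   state |c1 c2> and all auxiliary modes in the vacuum, given logical input
   |b1 b2> and auxiliary vacuum. *)
Definition postsel (n : nat) (V : 'M[C]_(n.+4)) (c1 c2 b1 b2 : bool) : C :=
  amp2 V (mode1 n b1) (mode2 n b2) (mode1 n c1) (mode2 n c2).

Definition Uphi (phi : R) (c1 c2 b1 b2 : bool) : C :=
  if (c1 == b1) && (c2 == b2) then
    (if b1 && b2 then (cos phi +i* sin phi) else 1)
  else 0.

Definition implements (phi : R) (n : nat) (V : 'M[C]_(n.+4)) (p : R) : Prop :=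
  0 < p /\
  exists c : C, `|c| = 1 /\
    forall c1 c2 b1 b2 : bool,
      postsel V c1 c2 b1 b2 = (Num.sqrt p)%:C * c * Uphi phi c1 c2 b1 b2.

Definition ps_opt (phi : R) : R :=
  (1 + 2 * `|sin (phi / 2)|
     + Num.sqrt 2 ^+ 3 * sin ((pi - phi) / 4) * Num.sqrt `|sin (phi / 2)|) ^-2.

End LinearOptics.

(* Main.v *)
Require Import Defs.
From HB Require Import structures.
From mathcomp Require Import all_boot all_order all_algebra.
From mathcomp Require Import complex.
From mathcomp Require Import reals trigo.
From mathcomp Require Import ring lra.
Import Order.TTheory GRing.Theory Num.Theory.
Local Open Scope ring_scope.
Set Implicit Arguments.
Unset Strict Implicit.


Lemma sum_ind (C : pzRingType) m (F : 'I_m -> C) (l : 'I_m) :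
  \sum_(l' < m) F l' * ((l' == l) : nat)%:R = F l.
Proof.
rewrite (bigD1 l) //= eqxx mulr1 big1 ?addr0 // => i /negbTE ->; by rewrite mulr0.
Qed.

Lemma amp2E (R : realType) m (V : 'M[R[i]]_m) i j k l : k != l ->
  amp2 V i j k l = V k i * V l j + V l i * V k j.
Proof.
move=> kl; rewrite /amp2.
have H : forall k' l' : 'I_m, ((((k', l') == (k, l)) || ((k', l') == (l, k))) : nat)%:R
   = ((k' == k) : nat)%:R * ((l' == l) : nat)%:R + ((k' == l) : nat)%:R * ((l' == k) : nat)%:R :> R[i].
  move=> k' l'; rewrite !xpair_eqE.
  case e1: (k' == k); case e2: (l' == l); case e3: (k' == l); case e4: (l' == k) => //=;
   rewrite ?mul1r ?mul0r ?addr0 ?add0r //;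
   try (by move/eqP: e1 => e1; move/eqP: e3 => e3; move: kl; rewrite -e1 -e3 eqxx);
   try (by move/eqP: e2 => e2; move/eqP: e4 => e4; move: kl; rewrite -e2 -e4 eqxx).
under eq_bigr do under eq_bigr do rewrite H mulrDr.
under eq_bigr do rewrite big_split /=.
rewrite big_split /=.
have E : forall (a b : 'I_m) (F G : 'I_m -> R[i]),
  \sum_(k' < m) \sum_(l' < m) F k' * G l' * (((k' == a) : nat)%:R * ((l' == b) : nat)%:R) = F a * G b.
  move=> a b F G.
  under eq_bigr do under eq_bigr do rewrite mulrACA.
  under eq_bigr do rewrite -mulr_sumr sum_ind.
  by rewrite -mulr_suml sum_ind.
rewrite !E; ring.
Qed.


Lemma CS (C : numClosedFieldType) (I : finType) (Pr : pred I) (f g : I -> C) :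
  (\sum_(k | Pr k) f k * (g k)^*) * (\sum_(k | Pr k) f k * (g k)^*)^*
   <= (\sum_(k | Pr k) f k * (f k)^*) * (\sum_(k | Pr k) g k * (g k)^*).
Proof.
set al := \sum_(k | Pr k) f k * (f k)^*.
set be := \sum_(k | Pr k) g k * (g k)^*.
set ga := \sum_(k | Pr k) f k * (g k)^*.
have be0 : 0 <= be by apply: sumr_ge0 => k _; exact: mul_conjC_ge0.
have al0 : 0 <= al by apply: sumr_ge0 => k _; exact: mul_conjC_ge0.
have [bz|bnz] := eqVneq be 0.
  have gz : forall k, Pr k -> g k = 0.
    move=> k Pk; apply/eqP; rewrite -mul_conjC_eq0; apply/eqP.
    by apply: (psumr_eq0P _ bz) => // k' _; exact: mul_conjC_ge0.
  have -> : ga = 0 by rewrite /ga big1 // => k Pk; rewrite gz // rmorph0 mulr0.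
  by rewrite mul0r bz mulr0.
have bpos : 0 < be by rewrite lt_def bnz be0.
have bconj : be^* = be by apply: geC0_conj.
have key : \sum_(k | Pr k) (be * f k - ga * g k) * (be * f k - ga * g k)^* = be * (al * be - ga * ga^*).
  have E : forall k, (be * f k - ga * g k) * (be * f k - ga * g k)^* =
     (be * be) * (f k * (f k)^*) - (be * ga^*) * (f k * (g k)^*) - (ga * be) * (g k * (f k)^*)
     + (ga * ga^*) * (g k * (g k)^*).
    by move=> k; rewrite rmorphB !rmorphM /= bconj; ring.
  under eq_bigr do rewrite E.
  rewrite !big_split /= !sumrN -!mulr_sumr.
  have -> : \sum_(k | Pr k) g k * (f k)^* = ga^*.
    by rewrite /ga rmorph_sum; apply: eq_bigr => k _; rewrite rmorphM /= conjCK mulrC.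
  rewrite -/al -/be -/ga; ring.
have : 0 <= be * (al * be - ga * ga^*).
  by rewrite -key; apply: sumr_ge0 => k _; exact: mul_conjC_ge0.
by rewrite pmulr_rge0 // subr_ge0.
Qed.

Lemma contr (R : realType) m (V : 'M[R[i]]_m) (r1 r2 k1 k2 : 'I_m) :
  unitary_mx V -> r1 != r2 -> k1 != k2 ->
  0 <= 1 - `|V r1 k1|^+2 - `|V r1 k2|^+2 /\
  0 <= 1 - `|V r2 k1|^+2 - `|V r2 k2|^+2 /\
  0 <= 1 - (`|V r1 k1|^+2 + `|V r1 k2|^+2 + `|V r2 k1|^+2 + `|V r2 k2|^+2)
       + `|V r1 k1 * V r2 k2 - V r1 k2 * V r2 k1|^+2.
Proof.
move=> hU r12 k12.
have uE : forall r r', \sum_k V r k * (V r' k)^* = ((r == r') : nat)%:R.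
  move=> r r'; have := hU; rewrite /unitary_mx => /matrixP /(_ r r'); rewrite !mxE /= => <-.
  by apply: eq_bigr => k _; rewrite !mxE.
pose Pr := fun k : 'I_m => (k != k1) && (k != k2).
have split : forall r r', \sum_k V r k * (V r' k)^* =
   V r k1 * (V r' k1)^* + V r k2 * (V r' k2)^* + \sum_(k | Pr k) V r k * (V r' k)^*.
  move=> r r'; rewrite (bigD1 k1) //= (bigD1 k2) /=; last by rewrite eq_sym.
  by rewrite addrA.
have e11 := uE r1 r1; have e22 := uE r2 r2; have e12 := uE r1 r2.
rewrite split eqxx /= mulr1n in e11; rewrite split eqxx /= mulr1n in e22.
rewrite split (negbTE r12) /= mulr0n in e12.
set al := \sum_(k | Pr k) V r1 k * (V r1 k)^* in e11.
set be := \sum_(k | Pr k) V r2 k * (V r2 k)^* in e22.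
set ga := \sum_(k | Pr k) V r1 k * (V r2 k)^* in e12.
have hcs : ga * ga^* <= al * be by apply: CS.
have al0 : 0 <= al by apply: sumr_ge0 => k _; exact: mul_conjC_ge0.
have be0 : 0 <= be by apply: sumr_ge0 => k _; exact: mul_conjC_ge0.
rewrite !normCK.
have Eal : al = 1 - V r1 k1 * (V r1 k1)^* - V r1 k2 * (V r1 k2)^*.
  by rewrite -e11 /=; ring.
have Ebe : be = 1 - V r2 k1 * (V r2 k1)^* - V r2 k2 * (V r2 k2)^*.
  by rewrite -e22 /=; ring.
have Ega : ga = - (V r1 k1 * (V r2 k1)^* + V r1 k2 * (V r2 k2)^*).
  by move/eqP: e12; rewrite addrC addr_eq0 => /eqP ->.
split; first by rewrite -Eal.
split; first by rewrite -Ebe.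
rewrite Eal Ebe Ega in hcs.
move: hcs; rewrite -subr_ge0; congr (0 <= _).
rewrite !rmorphN !rmorphD !rmorphM /= !rmorphN /= !rmorphM /= !conjCK; ring.
Qed.


Definition Uf {F : pzRingType} (w : F) (c d a b : bool) : F :=
  if (c == a) && (d == b) then (if a && b then w else 1) else 0.

Definition Good {F : fieldType} (P T Q S : bool -> bool -> F) (s w : F) :=
  forall c d a b, P c a * T d b + S d a * Q c b = s * Uf w c d a b.

Lemma good_swap (F : fieldType) P T Q S (s w : F) :
  Good P T Q S s w -> Good T P S Q s w.
Proof.
move=> G c d a b; have := G d c b a; rewrite /Uf [(d == b) && _]andbC [b && a]andbC.
by move=> <-; ring.
Qed.

Lemma Uf_diag (F : nzRingType) (w : F) a b : w != 0 -> Uf w a b a b != 0.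
Proof. by move=> wn; rewrite /Uf !eqxx /=; case: (a && b) => //; exact: oner_neq0. Qed.

Lemma Uf_off (F : pzRingType) (w : F) c d a b : (c != a) || (d != b) -> Uf w c d a b = 0.
Proof. by rewrite /Uf; case: (c == a); case: (d == b). Qed.

Lemma neg_ne (a : bool) : a != ~~ a. Proof. by case: a. Qed.
Lemma neg_ne' (a : bool) : ~~ a != a. Proof. by case: a. Qed.

Lemma step1_abs (F : fieldType) (p00 p01 t00 t01 s00 s01 q00 q01 s W : F) :
  s != 0 -> W != 0 ->
  p00*t00 + s00*q00 = s*W -> p01*t01 + s01*q01 = 0 ->
  p00*t01 + s00*q01 = 0 -> p01*t00 + s01*q00 = 0 -> p01*t01 = 0.
Proof.
move=> sn Wn e1 e2 e3 e4.
have: s * W * (p01 * t01) = - ((p00*t00 + s00*q00) - s * W) * (p01 * t01) + s00 * q00 * (p01*t01 + s01*q01)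
   - (p00*t01 + s00*q01) * (p01*t00 + s01*q00) + (p00*t01 + s00*q01) * (p01 * t00)
   + p00 * t01 * (p01*t00 + s01*q00) by ring.
rewrite e1 e2 e3 e4 subrr !(mul0r, mulr0, oppr0, addr0, subr0, add0r) => /eqP.
by rewrite mulf_eq0 mulf_eq0 (negbTE sn) (negbTE Wn) /= => /eqP.
Qed.



Lemma step1 (F : fieldType) P T Q S (s w : F) : Good P T Q S s w -> s != 0 -> w != 0 ->
  forall al be, P al (~~ al) * T be (~~ be) = 0.
Proof.
move=> G sn wn al be.
apply: (@step1_abs F (P al al) _ (T be be) _ (S be al) (S be (~~al)) (Q al be) (Q al (~~ be)) s (Uf w al be al be) sn (Uf_diag al be wn)).
- exact: G.
- by rewrite G Uf_off ?mulr0 // neg_ne.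
- by rewrite G Uf_off ?mulr0 // neg_ne orbT.
- by rewrite G Uf_off ?mulr0 // neg_ne.
Qed.

Lemma Tdiag_nz (F : fieldType) P T Q S (s w : F) : Good P T Q S s w -> s != 0 -> w != 0 ->
  forall be, T be be != 0.
Proof.
move=> G sn wn be; apply/negP => /eqP T0.
have e1 := G false be false be; have e2 := G true be true be; have e3 := G false be true be.
rewrite T0 mulr0 add0r in e1; rewrite T0 mulr0 add0r in e2; rewrite T0 mulr0 add0r Uf_off // mulr0 in e3.
have h1 : S be false * Q false be != 0 by rewrite e1 mulf_neq0 // Uf_diag.
have h2 : S be true * Q true be != 0 by rewrite e2 mulf_neq0 // Uf_diag.
move: h1 h2; rewrite !mulf_eq0 !negb_or => /andP[_ q0] /andP[s1 _].
by move/eqP: e3; rewrite mulf_eq0 (negbTE s1) (negbTE q0).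
Qed.

Lemma Pdiag_nz (F : fieldType) P T Q S (s w : F) : Good P T Q S s w -> s != 0 -> w != 0 ->
  forall al, P al al != 0.
Proof. move=> G; exact: (Tdiag_nz (good_swap G)). Qed.

Lemma Poff0 (F : fieldType) P T Q S (s w : F) : Good P T Q S s w -> s != 0 -> w != 0 ->
  forall al, P al (~~ al) = 0.
Proof.
move=> G sn wn al; apply/eqP/negPn/negP => pn.
have Toff : forall be, T be (~~ be) = 0.
  move=> be; have := step1 G sn wn al be; move/eqP; rewrite mulf_eq0 (negbTE pn) /=; by move/eqP.
have r : forall be, S be (~~ al) * Q al be = - (P al (~~ al) * T be be).
  move=> be; have := G al be (~~ al) be; rewrite Uf_off ?neg_ne // mulr0 => /eqP.
  by rewrite addrC addr_eq0 => /eqP.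
have r0 := r false; have r1 := r true.
have h0 : S false (~~ al) * Q al false != 0 by rewrite r0 oppr_eq0 mulf_neq0 // (Tdiag_nz G sn wn).
have h1 : S true (~~ al) * Q al true != 0 by rewrite r1 oppr_eq0 mulf_neq0 // (Tdiag_nz G sn wn).
have e := G al false (~~ al) true.
rewrite Uf_off ?neg_ne // mulr0 (Toff false) mulr0 add0r in e.
move: h0 h1; rewrite !mulf_eq0 !negb_or => /andP[sf _] /andP[_ qt].
by move/eqP: e; rewrite mulf_eq0 (negbTE sf) (negbTE qt).
Qed.

Lemma Toff0 (F : fieldType) P T Q S (s w : F) : Good P T Q S s w -> s != 0 -> w != 0 ->
  forall be, T be (~~ be) = 0.
Proof. move=> G; exact: (Poff0 (good_swap G)). Qed.

Lemma offeq (F : fieldType) P T Q S (s w : F) : Good P T Q S s w -> s != 0 -> w != 0 ->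
  forall c d a b, (c != a) || (d != b) -> S d a * Q c b = 0.
Proof.
move=> G sn wn c d a b h.
have Pz : forall c a, c != a -> P c a = 0.
  by move=> c' a'; case: c'; case: a' => // _; [exact: (Poff0 G sn wn true) | exact: (Poff0 G sn wn false)].
have Tz : forall c a, c != a -> T c a = 0.
  by move=> c' a'; case: c'; case: a' => // _; [exact: (Toff0 G sn wn true) | exact: (Toff0 G sn wn false)].
have := G c d a b; rewrite Uf_off // mulr0.
by case/orP: h => h; rewrite ?(Pz _ _ h) ?(Tz _ _ h) ?mul0r ?mulr0 add0r.
Qed.

Lemma Kprod (F : fieldType) P T Q S (s w : F) : Good P T Q S s w -> s != 0 -> w != 0 ->
  forall a b a' b', (a != a') || (b != b') -> (Q a b * S b a) * (Q a' b' * S b' a') = 0.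
Proof.
move=> G sn wn a b a' b' h.
have -> : Q a b * S b a * (Q a' b' * S b' a') = (S b' a' * Q a b) * (S b a * Q a' b') by ring.
rewrite (offeq G sn wn (c:=a) (d:=b') (a:=a') (b:=b)) ?mul0r //; by rewrite [b' == b]eq_sym.
Qed.

Lemma diag_eq (F : fieldType) P T Q S (s w : F) : Good P T Q S s w ->
  forall a b, P a a * T b b = s * (if a && b then w else 1) - Q a b * S b a.
Proof.
move=> G a b; have := G a b a b; rewrite /Uf !eqxx /= => <-; ring.
Qed.

Lemma classify (F : fieldType) P T Q S (s w : F) : Good P T Q S s w -> s != 0 -> w != 0 -> w != 1 ->
  [\/ P true true * T true true = s /\ Q true true * S true true = s * (w - 1),
      P true true * T false false = s * w /\ Q true false * S false true = s * (1 - w),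
      P false false * T true true = s * w /\ Q false true * S true false = s * (1 - w) |
      P false false * T false false * w = s /\ Q false false * S false false * w = s * (w - 1)].
Proof.
move=> G sn wn w1.
have K := Kprod G sn wn.
have R : (P true true * T true true) * (P false false * T false false) =
         (P true true * T false false) * (P false false * T true true) by ring.
have d11 := diag_eq G true true; have d10 := diag_eq G true false.
have d01 := diag_eq G false true; have d00 := diag_eq G false false.
simpl in d11, d10, d01, d00.
set k11 := Q true true * S true true in d11 K *.
set k10 := Q true false * S false true in d10 K *.
set k01 := Q false true * S true false in d01 K *.
set k00 := Q false false * S false false in d00 K *.
have zz : forall x y : F, x != 0 -> x * y = 0 -> y = 0.
  by move=> x y xn /eqP; rewrite mulf_eq0 (negbTE xn) /= => /eqP.
have [h11|h11] := eqVneq k11 0; last first.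
  have z00 : k00 = 0 by apply: (zz _ _ h11); exact: (K true true false false).
  have z01 : k01 = 0 by apply: (zz _ _ h11); exact: (K true true false true).
  have z10 : k10 = 0 by apply: (zz _ _ h11); exact: (K true true true false).
  rewrite d00 d01 d10 z00 z01 z10 !subr0 !mulr1 in R.
  have e : P true true * T true true = s by apply: (mulIf sn); rewrite R.
  constructor 1; split => //; have -> : k11 = s * w - P true true * T true true by rewrite d11; ring.
  by rewrite e; ring.
have [h10|h10] := eqVneq k10 0; last first.
  have z00 : k00 = 0 by apply: (zz _ _ h10); exact: (K true false false false).
  have z01 : k01 = 0 by apply: (zz _ _ h10); exact: (K true false false true).
  rewrite d00 d01 d11 z00 z01 h11 !subr0 !mulr1 in R.
  have e : P true true * T false false = s * w by apply: (mulIf sn); rewrite -R; ring.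
  constructor 2; split => //; have -> : k10 = s - P true true * T false false by rewrite d10; ring.
  by rewrite e; ring.
have [h01|h01] := eqVneq k01 0; last first.
  have z00 : k00 = 0 by apply: (zz _ _ h01); exact: (K false true false false).
  rewrite d00 d10 d11 z00 h10 h11 !subr0 !mulr1 in R.
  have e : P false false * T true true = s * w by apply: (mulIf sn); rewrite R; ring.
  constructor 3; split => //; have -> : k01 = s - P false false * T true true by rewrite d01; ring.
  by rewrite e; ring.
have [h00|h00] := eqVneq k00 0.
  rewrite d00 d01 d10 d11 h00 h01 h10 h11 !subr0 !mulr1 in R.
  have : s * s * (w - 1) = 0 by rewrite (_ : s * s * (w - 1) = s * w * s - s * s); [rewrite R subrr | ring].
  move/eqP; rewrite !mulf_eq0 (negbTE sn) subr_eq0 (negbTE w1) //.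
rewrite d01 d10 d11 h01 h10 h11 !subr0 !mulr1 in R.
have e : P false false * T false false * w = s.
  apply: (mulIf sn); rewrite -R; ring.
constructor 4; split => //.
have -> : k00 = s - P false false * T false false by rewrite d00; ring.
by rewrite mulrBl e; ring.
Qed.


Lemma normcE' (R : realType) (z : R[i]) : `|z| = ((Normc.normc z)%:C)%C.
Proof. reflexivity. Qed.

Lemma rC_inj (R : realType) (r r' : R) : (r%:C)%C = (r'%:C)%C -> r = r'.
Proof. by case. Qed.

Lemma rC_le (R : realType) (r r' : R) : ((r%:C)%C <= (r'%:C)%C) = (r <= r').
Proof. exact: lecR. Qed.

Lemma final_real (R : realType) (A B C D z x y : R) :
  0 <= A -> 0 <= B -> 0 <= C -> 0 <= D -> 0 <= z -> 0 <= x -> 0 <= y ->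
  0 <= 1 - A^+2 - B^+2 -> 0 <= 1 - C^+2 - D^+2 ->
  0 <= 1 - (A^+2 + B^+2 + C^+2 + D^+2) + z^+2 * (1 + 2 * x^+2) ->
  A * D = z -> B * C = z * x -> y^+2 = 2 * x - x^+2 ->
  z * (1 + x + y) <= 1.
Proof.
move=> A0 B0 C0 D0 z0 x0 y0 h1 h2 h3 hAD hBC hy.
have hF : 2 * z * (1 + x) <= A^+2 + B^+2 + C^+2 + D^+2.
  have : 0 <= (A - D)^+2 + (B - C)^+2 by rewrite addr_ge0 // sqr_ge0.
  move=> h; nra.
have ht : 0 <= 1 - z * (1 + x) by nra.
have ht2 : (z * y)^+2 <= (1 - z * (1 + x))^+2.
  rewrite exprMn hy; nra.
have : z * y <= 1 - z * (1 + x).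
  by rewrite -(@ler_pXn2r _ 2) // ?nnegrE ?mulr_ge0.
lra.
Qed.

Lemma parallelogram (C : numClosedFieldType) (u e : C) :
  `|u - e|^+2 = 2 * `|u|^+2 + 2 * `|e|^+2 - `|u + e|^+2.
Proof. rewrite !normCK !rmorphB !rmorphD /=; ring. Qed.

Lemma ineq (R : realType) (a b c d s u e : R[i]) (x y z : R) :
 0 <= 1 - `|a|^+2 - `|b|^+2 -> 0 <= 1 - `|c|^+2 - `|d|^+2 ->
 0 <= 1 - (`|a|^+2 + `|b|^+2 + `|c|^+2 + `|d|^+2) + `|a*d - b*c|^+2 ->
 a * d = s * u -> b * c = s * e -> `|u| = 1 -> `|e| = (x%:C)%C -> `|u + e| = 1 ->
 `|s| = (z%:C)%C -> 0 <= y -> y^+2 = 2*x - x^+2 -> z * (1+x+y) <= 1.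
Proof.
move=> h1 h2 h3 ead ebc hu he hue hs y0 hy.
have hde : `|a*d - b*c|^+2 = ((z^+2 * (1 + 2 * x^+2))%:C)%C.
  rewrite ead ebc -mulrBr normrM exprMn parallelogram hu he hue hs.
  rewrite !(rmorphD, rmorphM, rmorphXn, rmorph1) /= (_ : 2 = (2%:C)%C) //; ring.
rewrite hde !normcE' in h1 h2 h3.
have x0 : 0 <= x by rewrite -ler0c -he normr_ge0.
have z0 : 0 <= z by rewrite -ler0c -hs normr_ge0.
apply: (@final_real R (Normc.normc a) (Normc.normc b) (Normc.normc c) (Normc.normc d));
  try done;
  try (by rewrite -ler0c -normcE' normr_ge0);
  try (by rewrite -ler0c !(rmorphB, rmorphD, rmorphM, rmorphXn, rmorph1)).
- move: h3; rewrite !expr2 lecE /= => /andP[_ h]. lra.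
- apply: rC_inj; rewrite rmorphM /= -!normcE' -normrM ead normrM hu mulr1 hs //.
- by apply: rC_inj; rewrite rmorphM /= -!normcE' -normrM ebc normrM he hs; apply/eqP; rewrite eq_complex /= !mulr0 !mul0r subr0 addr0 !eqxx.
Qed.


Lemma half2 (R : realType) (t : R) : t = (t / 2) *+ 2.
Proof. by rewrite -mulr_natr mulfVK // pnatr_eq0. Qed.

Lemma trigA (R : realType) (phi : R) : 0 <= phi <= pi ->
  [/\ 0 <= sin (phi / 2), cos phi = 1 - 2 * sin (phi / 2) ^+ 2,
      sin phi = 2 * sin (phi / 2) * cos (phi / 2), cos (phi / 2) ^+ 2 = 1 - sin (phi / 2) ^+ 2
      & 0 <= cos (phi / 2)].
Proof.
move=> /andP[p0 ppi].
have pi0 := @pi_ge0 R.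
have hphi := half2 phi.
split.
- apply: sin_ge0_pi; apply/andP; split; lra.
- by rewrite {1}hphi cos_mulr2n cos2sin2; ring.
- by rewrite {1}hphi sin_mulr2n; ring.
- exact: cos2sin2.
- apply: cos_ge0_pihalf; apply/andP; split; lra.
Qed.

Lemma trigB (R : realType) (phi : R) : 0 <= phi <= pi ->
  0 <= sin ((pi - phi) / 4) /\ 2 * sin ((pi - phi) / 4) ^+ 2 = 1 - sin (phi / 2).
Proof.
move=> /andP[p0 ppi].
have pi0 := @pi_ge0 R.
split.
- apply: sin_ge0_pi; apply/andP; split; lra.
- have h2 : (pi - phi) / 2 = ((pi - phi) / 4) *+ 2.
    by rewrite -mulr_natr; field.
  have : cos ((pi - phi) / 2) = sin (phi / 2).
    rewrite (_ : (pi - phi) / 2 = - (phi / 2 - pi / 2)); last by field => //.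
    by rewrite cosN cosBpihalf.
  rewrite h2 cos_mulr2n cos2sin2 => <-; ring.
Qed.

Lemma mode_ne n (c d : bool) : mode1 n c != mode2 n d.
Proof.
rewrite /mode1 /mode2; apply/eqP => /(congr1 val) /=.
by rewrite !inordK //; case: c; case: d.
Qed.

Lemma normw (R : realType) (phi : R) : `|(cos phi +i* sin phi)%C| = 1.
Proof.
rewrite normcE' /= cos2Dsin2 sqrtr1 //.
Qed.

Lemma normw1 (R : realType) (phi : R) : 0 <= phi <= pi ->
  `|(cos phi +i* sin phi)%C - 1| = (((2 * sin (phi / 2)))%:C)%C.
Proof.
move=> hphi; have [X0 hc hs hcc _] := trigA hphi.
rewrite normcE'; congr (_%:C)%C; rewrite /=.
rewrite (_ : (cos phi + - 1) ^+ 2 + (sin phi + - 0) ^+ 2 = (2 * sin (phi/2)) ^+ 2).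
  by rewrite sqrtr_sqr ger0_norm // mulr_ge0.
rewrite hc hs oppr0 addr0.
have -> : (2 * sin (phi / 2) * cos (phi / 2)) ^+ 2 = 4 * sin (phi / 2) ^+ 2 * cos (phi / 2) ^+ 2 by ring.
rewrite hcc; ring.
Qed.

Lemma ineq1 (R : realType) (a b c d s : R[i]) (z : R) :
 0 <= 1 - `|a|^+2 - `|b|^+2 -> 0 <= 1 - `|c|^+2 - `|d|^+2 ->
 a * d + b * c = s -> `|s| = (z%:C)%C -> z <= 1.
Proof.
move=> h1 h2 e hs.
have : `|s| <= `|a| * `|d| + `|b| * `|c| by rewrite -e -!normrM ler_normD.
rewrite hs !normcE' in h1 h2 *.
move: h1 h2; rewrite !expr2 !lecE /= => /andP[_ h1] /andP[_ h2] /andP[_ h3].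
have := normr_ge0 a; have := normr_ge0 b; have := normr_ge0 c; have := normr_ge0 d.
rewrite !normcE' !lecE /= => /andP[_ d0] /andP[_ c0] /andP[_ b0] /andP[_ a0].
rewrite !mul0r !subr0 in h1 h2 h3.
have := sqr_ge0 (Normc.normc a - Normc.normc d); have := sqr_ge0 (Normc.normc b - Normc.normc c).
nra.
Qed.

Lemma sq_bound (R : realType) (z L : R) : 0 <= z -> 0 < L -> z * L <= 1 -> z ^+ 2 <= L ^-2.
Proof.
move=> z0 L0 h.
have : z <= L^-1 by rewrite -[L^-1]mul1r ler_pdivlMr.
move=> h'; rewrite -exprVn; apply: lerXn2r => //; rewrite ?nnegrE ?invr_ge0 ?ltW //.
Qed.

Lemma part1 (R : realType) (phi : R) (hphi : 0 <= phi <= pi) n (V : 'M[R[i]]_(n.+4)) p :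
  unitary_mx V -> implements phi V p -> p <= ps_opt phi.
Proof.
move=> hU [hp [c [hc heq]]].
set w : R[i] := (cos phi +i* sin phi)%C.
set s : R[i] := ((Num.sqrt p)%:C)%C * c.
pose P := fun c a => V (mode1 n c) (mode1 n a).
pose T := fun d b => V (mode2 n d) (mode2 n b).
pose Q := fun c b => V (mode1 n c) (mode2 n b).
pose S := fun d a => V (mode2 n d) (mode1 n a).
have G : Good P T Q S s w.
  move=> c1 d1 a1 b1.
  rewrite (_ : P c1 a1 * _ + _ = postsel V c1 d1 a1 b1); first exact: heq.
  by rewrite /postsel amp2E // mode_ne.
set z := Num.sqrt p.
have z0 : 0 <= z by exact: sqrtr_ge0.
have hs : `|s| = (z%:C)%C by rewrite normrM hc mulr1 ger0_norm // ler0c.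
have sn : s != 0 by rewrite -normr_eq0 hs; apply/eqP => -[]; apply/eqP; rewrite sqrtr_eq0 -ltNge.
have wn : w != 0 by rewrite -normr_eq0 normw oner_neq0.
have [X0 hc2 hs2 hcc _] := trigA hphi.
have [S0 hS] := trigB hphi.
set X := sin (phi / 2) in X0 hc2 hs2 hcc hS *.
set y := Num.sqrt 2 ^+ 3 * sin ((pi - phi) / 4) * Num.sqrt X.
have y0 : 0 <= y by rewrite mulr_ge0 ?sqrtr_ge0 // mulr_ge0 // exprn_ge0 // sqrtr_ge0.
have hy : y ^+ 2 = 2 * (2 * X) - (2 * X) ^+ 2.
  rewrite /y !exprMn !sqr_sqrtr //.
  have -> : 2 * (2 * 2) * sin ((pi - phi) / 4) ^+ 2 * X = 4 * X * (2 * sin ((pi - phi) / 4) ^+ 2) by ring.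
  rewrite hS; ring.
have -> : ps_opt phi = (1 + 2 * X + y) ^-2 by rewrite /ps_opt ger0_norm.
have -> : p = z ^+ 2 by rewrite sqr_sqrtr // ltW.
apply: sq_bound => //; first by lra.
have hx : `|w - 1| = (((2 * X))%:C)%C by exact: normw1.
have [w1|w1] := eqVneq w 1.
  have X00 : 2 * X = 0.
    apply: rC_inj; rewrite -hx w1 subrr normr0 //.
  have y00 : y = 0.
    have : y ^+ 2 = 0 by rewrite hy X00; ring.
    by move/eqP; rewrite expf_eq0 /= => /eqP.
  rewrite X00 y00 addr0 addr0 mulr1.
  have [h1 [h2 _]] := contr hU (mode_ne n false false) (mode_ne n false false).
  apply: (ineq1 h1 h2 _ hs).
  have := G false false false false; rewrite /Uf /= mulr1 => <-.
  by rewrite /P /T /Q /S; ring.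
have hxx : (2 * X) * (1 + 2 * X) <= 1 + 2 * X + y - 1 + (2*X)*(2*X) by nra.
case: (classify G sn wn w1) => [[e1 e2]|[e1 e2]|[e1 e2]|[e1 e2]].
- have [h1 [h2 h3]] := contr hU (mode_ne n true true) (mode_ne n true true).
  apply: (ineq h1 h2 h3 (u := 1) (e := w - 1) _ _ _ hx _ hs y0 hy).
  + by rewrite mulr1; exact: e1.
  + exact: e2.
  + exact: normr1.
  + by rewrite addrC subrK normw.
- have [h1 [h2 h3]] := contr hU (mode_ne n true false) (mode_ne n true false).
  apply: (ineq h1 h2 h3 (u := w) (e := 1 - w) _ _ _ _ _ hs y0 hy).
  + exact: e1.
  + exact: e2.
  + exact: normw.
  + by rewrite distrC.
  + by rewrite addrC subrK normr1.
- have [h1 [h2 h3]] := contr hU (mode_ne n false true) (mode_ne n false true).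
  apply: (ineq h1 h2 h3 (u := w) (e := 1 - w) _ _ _ _ _ hs y0 hy).
  + exact: e1.
  + exact: e2.
  + exact: normw.
  + by rewrite distrC.
  + by rewrite addrC subrK normr1.
- have [h1 [h2 h3]] := contr hU (mode_ne n false false) (mode_ne n false false).
  apply: (ineq h1 h2 h3 (u := w^-1) (e := (w - 1) / w) _ _ _ _ _ hs y0 hy).
  + by rewrite -e1 mulfK.
  + by rewrite mulrA -e2 mulfK.
  + by rewrite normfV normw invr1.
  + by rewrite normrM normfV normw invr1 mulr1.
  + have -> : w^-1 + (w - 1) / w = 1 by field.
    exact: normr1.
Qed.


Definition Vent (R : realType) (mu sg ka q : R[i]) (i j : nat) : R[i] :=
  match i, j with
  | 0, 0 => mu | 0, 4 => sg | 4, 0 => sg | 4, 4 => - mu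
  | 2, 2 => mu | 2, 5 => sg | 5, 2 => sg | 5, 5 => - mu
  | 1, 1 => mu | 1, 3 => q | 3, 1 => q | 3, 3 => mu
  | 1, 6 => ka | 3, 6 => - ka | 6, 1 => ka | 6, 3 => - ka
  | 6, 6 => q^* - mu
  | _, _ => 0
  end.

Definition V7 (R : realType) (mu sg ka q : R[i]) : 'M[R[i]]_7 :=
  \matrix_(i < 7, j < 7) Vent mu sg ka q i j.

Lemma unit7 (R : realType) (mu sg ka q : R[i]) :
  mu^* = mu -> sg^* = sg -> ka^* = ka ->
  mu * mu + sg * sg = 1 -> mu * mu + q * q^* + ka * ka = 1 -> mu * (q + q^*) = ka * ka ->
  unitary_mx (V7 mu sg ka q).
Proof.
move=> cmu csg cka r1 r2 r3.
apply/matrixP => i j; rewrite !mxE.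
rewrite !big_ord_recl big_ord0 /=.
rewrite /bump /=.
case: i => [[|[|[|[|[|[|[|i]]]]]]] Hi] //; case: j => [[|[|[|[|[|[|[|j]]]]]]] Hj] //=;
  rewrite !mxE /= ?rmorph0 ?rmorphN ?rmorphB /= ?cmu ?csg ?cka ?conjCK ?(mulr0, mul0r, addr0, add0r).
all: try done.
all: first [ ring | (rewrite -r1; ring) | (rewrite -r2; ring)
  | (transitivity (mu * (q + q^*) - ka * ka); [ring | by rewrite r3 subrr])
  | (transitivity ((mu*mu + q*q^* + ka*ka) - (mu*(q+q^*) - ka*ka)); [ring | by rewrite r2 r3 subrr subr0]) ].
Qed.



Lemma post7 (R : realType) (mu sg ka q t w : R[i]) :
  mu * mu = t -> q * q = t * (w - 1) ->
  forall c1 c2 b1 b2, postsel (n := 3) (V7 mu sg ka q) c1 c2 b1 b2 =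
    t * (if (c1 == b1) && (c2 == b2) then (if b1 && b2 then w else 1) else 0).
Proof.
move=> hmu hq c1 c2 b1 b2.
rewrite /postsel amp2E; last first.
  by rewrite /mode1 /mode2; apply/eqP => /(congr1 val) /=; rewrite !inordK //; case: c1; case: c2.
rewrite !mxE /mode1 /mode2 !inordK; last first.
all: try (by case: c1); try (by case: c2); try (by case: b1); try (by case: b2).
case: c1; case: c2; case: b1; case: b2 => /=; rewrite ?(mulr0, mul0r, addr0, add0r, mulr1) //.
- by rewrite hmu hq; ring.
all: by rewrite hmu.
Qed.

Lemma conjR (R : realType) (r : R) : Num.conj ((r%:C)%C) = (r%:C)%C.
Proof. by apply/eqP; rewrite eq_complex /= oppr0 !eqxx. Qed.

Lemma sq_inj (R : realType) (a b : R) : 0 <= a -> 0 <= b -> a ^+ 2 = b ^+ 2 -> a = b.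
Proof.
move=> a0 b0 h; by rewrite -(ger0_norm a0) -(ger0_norm b0) -!sqrtr_sqr h.
Qed.

Lemma hq3 (R : realType) (X Cc y qi : R) : 0 <= X -> 0 <= Cc -> 0 <= y -> 0 <= qi ->
  y ^+ 2 = 2 * (2 * X) - (2 * X) ^+ 2 -> qi ^+ 2 = (2 * (2 * X) + (2 * X) ^+ 2) / 4 ->
  Cc ^+ 2 = 1 - X ^+ 2 -> 2 * (y / 2) * qi = 2 * X * Cc.
Proof.
move=> X0 C0 y0 q0 hy hq hc; apply: sq_inj.
- by rewrite mulr_ge0 // mulr_ge0 // divr_ge0.
- by rewrite mulr_ge0 // mulr_ge0.
have -> : (2 * (y / 2) * qi) ^+ 2 = y ^+ 2 * qi ^+ 2 by field.
have -> : (2 * X * Cc) ^+ 2 = 4 * X ^+ 2 * Cc ^+ 2 by ring.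
by rewrite hy hq hc; field.
Qed.

Lemma part2 (R : realType) (phi : R) (hphi : 0 <= phi <= pi) :
  exists (n : nat) (V : 'M[R[i]]_(n.+4)), unitary_mx V /\ implements phi V (ps_opt phi).
Proof.
have [X0 hc2 hs2 hcc Cc0] := trigA hphi.
have [S0 hS] := trigB hphi.
set X := sin (phi / 2) in X0 hc2 hs2 hcc hS *.
set Cc := cos (phi / 2) in hs2 hcc Cc0.
set y := Num.sqrt 2 ^+ 3 * sin ((pi - phi) / 4) * Num.sqrt X.
have y0 : 0 <= y by rewrite mulr_ge0 ?sqrtr_ge0 // mulr_ge0 // exprn_ge0 // sqrtr_ge0.
have hy : y ^+ 2 = 2 * (2 * X) - (2 * X) ^+ 2.
  rewrite /y !exprMn !sqr_sqrtr //.
  have -> : 2 * (2 * 2) * sin ((pi - phi) / 4) ^+ 2 * X = 4 * X * (2 * sin ((pi - phi) / 4) ^+ 2) by ring.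
  rewrite hS; ring.
set L := 1 + 2 * X + y.
have L1 : 1 <= L by rewrite /L; lra.
have L0 : 0 < L by lra.
have Ln : L != 0 by rewrite gt_eqF.
have hps : ps_opt phi = L ^-2 by rewrite /ps_opt ger0_norm.
set nu := Num.sqrt L.
have nu2 : nu ^+ 2 = L by rewrite sqr_sqrtr // ltW.
have nun : nu != 0 by apply/eqP => h; move: nu2; rewrite h expr0n /= => h'; move: Ln; rewrite -h' eqxx.
set qr := y / 2.
set qi := Num.sqrt ((2 * (2 * X) + (2 * X) ^+ 2) / 4).
have qi2 : qi ^+ 2 = (2 * (2 * X) + (2 * X) ^+ 2) / 4.
  by rewrite sqr_sqrtr // divr_ge0 // addr_ge0 ?mulr_ge0 ?sqr_ge0.
have qi0 : 0 <= qi by exact: sqrtr_ge0.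
have hqq1 : qr ^+ 2 - qi ^+ 2 = cos phi - 1.
  by rewrite qi2 /qr expr_div_n hy hc2; field.
have hqq2 : qr ^+ 2 + qi ^+ 2 = 2 * X.
  by rewrite qi2 /qr expr_div_n hy; field.
have hqq3 : 2 * qr * qi = sin phi.
  by rewrite hs2; apply: hq3.
set mu : R[i] := (nu^-1%:C)%C.
set sg : R[i] := ((Num.sqrt (1 - L^-1))%:C)%C.
set ka : R[i] := ((Num.sqrt (y / L))%:C)%C.
set q : R[i] := ((qr / nu) +i* (qi / nu))%C.
set t : R[i] := (L^-1%:C)%C.
set w : R[i] := (cos phi +i* sin phi)%C.
have Linv : L^-1 <= 1 by rewrite invf_le1.
have sg2 : Num.sqrt (1 - L^-1) ^+ 2 = 1 - L^-1 by rewrite sqr_sqrtr // subr_ge0.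
have ka2 : Num.sqrt (y / L) ^+ 2 = y / L by rewrite sqr_sqrtr // divr_ge0 // ltW.
have nuinv2 : nu^-1 ^+ 2 = L^-1 by rewrite exprVn nu2.
have nn : nu^-1 / nu = L^-1 by rewrite -nuinv2 expr2.
have ss : Num.sqrt (1 - L^-1) * Num.sqrt (1 - L^-1) = 1 - L^-1 by rewrite -expr2 sg2.
have kk : Num.sqrt (y / L) * Num.sqrt (y / L) = y / L by rewrite -expr2 ka2.
have U : unitary_mx (V7 mu sg ka q).
  apply: unit7; rewrite ?conjR //.
  1-3: apply/eqP; rewrite eq_complex /=; apply/andP; split; apply/eqP.
  1-6: rewrite ?(mulr0, mul0r, subr0, addr0, oppr0, sub0r, add0r).
  - by rewrite nn ss; ring.
  - done.
  - rewrite nn kk.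
    have -> : qr / nu * (qr / nu) - qi / nu * - (qi / nu) = (qr ^+ 2 + qi ^+ 2) / nu ^+ 2.
      by field.
    rewrite hqq2 nu2.
    have -> : L^-1 + 2 * X / L + y / L = (1 + 2 * X + y) * L^-1 by ring.
    by rewrite -/L mulfV.
  - ring.
  - rewrite kk.
    have -> : nu^-1 * (qr / nu + qr / nu) = (2 * qr) / nu ^+ 2 by field.
    by rewrite nu2 /qr; field.
  - ring.
exists 3, (V7 mu sg ka q); split; first exact: U.
split; first by rewrite hps invr_gt0 exprn_gt0.
  exists 1; split; first exact: normr1.
  move=> c1 c2 b1 b2.
  have hsq : Num.sqrt (ps_opt phi) = L^-1.
    by rewrite hps -exprVn sqrtr_sqr ger0_norm // invr_ge0 ltW.
  rewrite (@post7 R mu sg ka q t w) ?hsq ?mulr1 //.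
  + apply/eqP; rewrite eq_complex /= !mulr0 !mul0r subr0 addr0 eqxx andbT -expr2.
    by rewrite nuinv2.
  + apply/eqP; rewrite eq_complex /=; apply/andP; split; apply/eqP.
    * have -> : qr / nu * (qr / nu) - qi / nu * (qi / nu) = (qr ^+ 2 - qi ^+ 2) / nu ^+ 2 by field.
      rewrite hqq1 nu2; ring.
    * have -> : qr / nu * (qi / nu) + qi / nu * (qr / nu) = (2 * qr * qi) / nu ^+ 2 by field.
      rewrite hqq3 nu2; ring.
Qed.

Unset Implicit Arguments.
Set Strict Implicit.

Theorem mainTheorem1 (R : realType) (phi : R) (hphi : 0 <= phi <= pi) :
  (forall (n : nat) (V : 'M[R[i]]_(n.+4)) (p : R),
      unitary_mx V -> implements phi V p -> p <= ps_opt phi) /\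
  (exists (n : nat) (V : 'M[R[i]]_(n.+4)),
      unitary_mx V /\ implements phi V (ps_opt phi)).
Proof.
split; first by move=> n V p; exact: part1.
exact: part2.
Qed.
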